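(* Let $n\ge2$, let $A=(a_{ij})\in\mathbb{R}^{n\times n}$ be pseudo-diagonalizable, and suppose $\max\{a_{11},\dots,a_{nn}\}\le0$. Then $\lambda(A)=0$, $\Gamma(A_\lambda)=I\oplus A$, and $d(A)=1$. Moreover, for any $i\in[n]$, letting $v^{(i)}$ be the vector obtained from the $i$-th column $A_i$ of $A$ by replacing its $i$-th entry by $0$, the set $\{v^{(i)}\}$ is a basis of $V(A)$, i.e. $V(A)=\{\alpha\otimes v^{(i)}:\alpha\in\overline{\mathbb{R}}\}$.
   Context: Max-plus conventions: $\overline{\mathbb{R}}=\mathbb{R}\cup\{-\infty\}$, $\varepsilon=-\infty$, $\oplus=\max$ (entrywise for matrices), $\otimes=+$; $(A\otimes B)_{ij}=\max_t(A_{it}+B_{tj})$, $(\alpha\otimes x)_i=\alpha+x_i$. $I$ is the matrix with $0$ on the diagonal and $\varepsilon$ elsewhere. $P$ is invertible iff it has exactly one real entry in each row and column (others $\varepsilon$); $A,B$ similar if $B=P^{-1}\otimes A\otimes P$ for invertible $P$. Pseudo-diagonal: real diagonal, off-diagonal entries equal to real $0$; pseudo-diagonalizable: similar to a pseudo-diagonal matrix. For finite $A$: $\lambda(A)$ is the maximum cycle mean $\max\{(a_{i_1i_2}+\dots+a_{i_ki_1})/k\}$ over $k\ge1$ and distinct $i_1,\dots,i_k$, the unique eigenvalue; $V(A)=\{x\in\overline{\mathbb{R}}^n:A\otimes x=\lambda(A)\otimes x\}$; $A_\lambda=(-\lambda(A))\otimes A$; $\Gamma(A)=A\oplus A^2\oplus\dots\oplus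 A^n$. A basis of a subspace is an independent generating set with respect to max-combinations; $d(A)$ is the number of elements of a basis of $V(A)$. *)

(* Defs.v *)
(* The max-plus semiring  Rbar = R ∪ {-oo}  is represented by [option R],
   with [None] = epsilon = -oo and [Some x] = the real x. *)
From HB Require Import structures.
From mathcomp Require Import all_boot all_order all_algebra.
Set Implicit Arguments. Unset Strict Implicit. Unset Printing Implicit Defensive.
Import Order.TTheory GRing.Theory Num.Theory.
Local Open Scope ring_scope.

Section MaxPlus.
Variable R : realFieldType.

Notation mp := (option R).

Definition mp_add (a b : mp) : mp :=
  match a, b with
  | None, _ => b
  | _, None => a
  | Some x, Some y => Some (Num.max x y)
  end.

Definition mp_mul (a b : mp) : mp :=
  match a, b with
  | Some x, Some y => Some (x + y)
  | _, _ => None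
  end.

Definition mp_eps_mx m p : 'M[mp]_(m, p) := const_mx None.

Definition mp_addmx m p (A B : 'M[mp]_(m, p)) : 'M[mp]_(m, p) :=
  \matrix_(i, j) mp_add (A i j) (B i j).

Definition mp_mulmx m q p (A : 'M[mp]_(m, q)) (B : 'M[mp]_(q, p)) : 'M[mp]_(m, p) :=
  \matrix_(i, j) \big[mp_add/None]_(t < q) mp_mul (A i t) (B t j).

Definition mp_scale m p (a : mp) (B : 'M[mp]_(m, p)) : 'M[mp]_(m, p) :=
  \matrix_(i, j) mp_mul a (B i j).

Definition mp_id n : 'M[mp]_n := \matrix_(i, j) if i == j then Some 0 else None.

Fixpoint mp_pow n (A : 'M[mp]_n) (k : nat) : 'M[mp]_n :=
  match k with
  | 0 => mp_id n
  | k'.+1 => mp_mulmx (mp_pow A k') A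
  end.

Definition mp_Gamma n (A : 'M[mp]_n) : 'M[mp]_n :=
  \big[@mp_addmx n n/mp_eps_mx n n]_(k < n) mp_pow A k.+1.

Definition fin_mx m p (A : 'M[R]_(m, p)) : 'M[mp]_(m, p) := map_mx Some A.

Definition mp_invertible n (P : 'M[mp]_n) : Prop :=
  (forall i, #|[set j | P i j != None]| = 1%N) /\
  (forall j, #|[set i | P i j != None]| = 1%N).

Definition mp_similar n (A B : 'M[mp]_n) : Prop :=
  exists P Q : 'M[mp]_n,
    [/\ mp_invertible P, mp_mulmx P Q = mp_id n, mp_mulmx Q P = mp_id n
      & B = mp_mulmx (mp_mulmx Q A) P].

Definition pseudo_diagonal n (D : 'M[mp]_n) : Prop :=
  (forall i, D i i != None) /\ (forall i j, i != j -> D i j = Some 0).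

Definition pseudo_diagonalizable n (A : 'M[mp]_n) : Prop :=
  exists D, pseudo_diagonal D /\ mp_similar A D.

(* cycle means of a finite matrix: a cycle of length k.+1 through distinct
   indices is an injective f : 'I_k.+1 -> 'I_n *)
Definition cycle_mean n (A : 'M[R]_n) k (f : {ffun 'I_k.+1 -> 'I_n}) : R :=
  (\sum_(t < k.+1) A (f t) (f (inord (t.+1 %% k.+1)))) / k.+1%:R.

Definition cycle_means n (A : 'M[R]_n) : seq R :=
  flatten [seq map (@cycle_mean n A k) (filter (fun g : {ffun 'I_k.+1 -> 'I_n} => injectiveb (fun t => g t)) (enum {ffun 'I_k.+1 -> 'I_n}))
          | k <- iota 0 n].

(* lambda(A): maximum cycle mean (the list is nonempty for n >= 1) *)
Definition mcm n (A : 'M[R]_n) : R :=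
  foldr Num.max (head 0 (cycle_means A)) (cycle_means A).

Definition A_lambda n (A : 'M[R]_n) : 'M[R]_n :=
  \matrix_(i, j) (A i j - mcm A).

Definition mp_eigenspace n (A : 'M[R]_n) (x : 'cV[mp]_n) : Prop :=
  mp_mulmx (fin_mx A) x = mp_scale (Some (mcm A)) x.

Definition in_span n (G : seq 'cV[mp]_n) (x : 'cV[mp]_n) : Prop :=
  exists a : 'I_(size G) -> mp,
    forall i, x i 0 = \big[mp_add/None]_(j < size G)
                         mp_mul (a j) (nth (mp_eps_mx n 1) G j i 0).

Definition mp_independent n (G : seq 'cV[mp]_n) : Prop :=
  forall j, (j < size G)%N ->
    ~ in_span (take j G ++ drop j.+1 G) (nth (mp_eps_mx n 1) G j).

Definition is_basis n (S : 'cV[mp]_n -> Prop) (G : seq 'cV[mp]_n) : Prop :=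
  mp_independent G /\ (forall x, S x <-> in_span G x).

Definition mp_dim_eq n (S : 'cV[mp]_n -> Prop) (d : nat) : Prop :=
  (exists G, is_basis S G /\ size G = d) /\
  (forall G, is_basis S G -> size G = d).

Definition vcol n (A : 'M[R]_n) (i : 'I_n) : 'cV[mp]_n :=
  \col_j (if j == i then Some 0 else Some (A j i)).

End MaxPlus.

(* Main.v *)
From HB Require Import structures.
From mathcomp Require Import all_boot all_order all_algebra.
From mathcomp Require Import ring lra.
Require Import Defs.
Set Implicit Arguments. Unset Strict Implicit. Unset Printing Implicit Defensive.
Import Order.TTheory GRing.Theory Num.Theory.
Local Open Scope ring_scope.

Section Aux.
Variable R : realFieldType.
Notation mp := (option R).

Lemma mp_addA : associative (@mp_add R).
Proof. by case=> [x|] [y|] [z|] //=; rewrite maxA. Qed.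
Lemma mp_addC : commutative (@mp_add R).
Proof. by case=> [x|] [y|] //=; rewrite maxC. Qed.
Lemma mp_add0l : left_id None (@mp_add R).
Proof. by case. Qed.

HB.instance Definition _ := Monoid.isComLaw.Build mp None (@mp_add R) mp_addA mp_addC mp_add0l.

Definition mp_le (a b : mp) : bool :=
  match a, b with None, _ => true | Some _, None => false | Some x, Some y => x <= y end.

Lemma mp_le_refl a : mp_le a a. Proof. by case: a => //= x. Qed.
Lemma mp_le_trans a b c : mp_le a b -> mp_le b c -> mp_le a c.
Proof. by case: a => [x|] // ; case: b => [y|] //; case: c => [z|] //= ; apply: le_trans. Qed.
Lemma mp_le_anti a b : mp_le a b -> mp_le b a -> a = b.
Proof. by case: a => [x|]; case: b => [y|] //= h1 h2; congr Some; apply/eqP; rewrite eq_le h1 h2. Qed.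
Lemma mp_le_add a b c : mp_le (mp_add a b) c = mp_le a c && mp_le b c.
Proof. by case: a => [x|]; case: b => [y|]; case: c => [z|] //=; rewrite ?ge_max ?andbT. Qed.
Lemma mp_le_addl a b : mp_le a (mp_add a b).
Proof. by case: a => [x|]; case: b => [y|] //=; rewrite ?le_max ?lexx. Qed.

Lemma mp_mul0 (a : mp) : mp_mul (Some 0) a = a. Proof. by case: a => //= x; rewrite add0r. Qed.
Lemma mp_mulC (a b : mp) : mp_mul a b = mp_mul b a. Proof. by case: a => [x|]; case: b => [y|] //=; rewrite addrC. Qed.
Lemma mp_mulN (a : mp) : mp_mul a None = None. Proof. by case: a. Qed.

Lemma big_le_ub n (F : 'I_n -> mp) b : (forall t, mp_le (F t) b) ->
  mp_le (\big[@mp_add R/None]_(t < n) F t) b.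
Proof.
move=> H; apply: (big_ind (fun x => mp_le x b)) => //.
by move=> x y hx hy; rewrite mp_le_add hx hy.
Qed.

Lemma big_ge_term n (F : 'I_n -> mp) t0 : mp_le (F t0) (\big[@mp_add R/None]_(t < n) F t).
Proof. by rewrite (bigD1 t0) //= mp_le_addl. Qed.

Lemma big_single n (F : 'I_n -> mp) t0 : (forall t, t != t0 -> F t = None) ->
  \big[@mp_add R/None]_(t < n) F t = F t0.
Proof.
move=> H; rewrite (bigD1 t0) //= big1; first by case: (F t0).
by move=> t /H.
Qed.

Lemma foldr_max_le (h : R) s b : h <= b -> (forall x, x \in s -> x <= b) -> foldr Num.max h s <= b.
Proof.
move=> hb; elim: s => //= y s IH H; rewrite ge_max H ?mem_head //=.
by apply: IH => x xs; apply: H; rewrite in_cons xs orbT.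
Qed.

Lemma foldr_max_ge (h : R) s x : x \in s -> x <= foldr Num.max h s.
Proof.
elim: s => //= y s IH; rewrite in_cons => /orP [/eqP ->|xs]; rewrite le_max ?lexx //.
by rewrite IH ?orbT.
Qed.

End Aux.
Lemma pd_potential (R : realFieldType) n (A : 'M[R]_n) : pseudo_diagonalizable (fin_mx A) ->
  exists d : 'I_n -> R, forall k l, k != l -> A k l = d k - d l.
Proof.
case=> D [[_ Doff] [P [Q [[Prow Pcol] _ QP HD]]]].
have rowP i : exists j, P i j != None /\ forall j', P i j' != None -> j' = j.
  move/eqP: (Prow i) => /cards1P [j Hj]; exists j; split.
    have: j \in [set j0 | P i j0 != None] by rewrite Hj set11.
    by rewrite inE.
  move=> j' Hj'; have: j' \in [set j0 | P i j0 != None] by rewrite inE.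
  by rewrite Hj inE => /eqP.
have colP j : exists i, P i j != None /\ forall i', P i' j != None -> i' = i.
  move/eqP: (Pcol j) => /cards1P [i Hi]; exists i; split.
    have: i \in [set i0 | P i0 j != None] by rewrite Hi set11.
    by rewrite inE.
  move=> i' Hi'; have: i' \in [set i0 | P i0 j != None] by rewrite inE.
  by rewrite Hi inE => /eqP.
have [c Hc] := fin_all_exists rowP.
pose p k := odflt 0 (P k (c k)).
have Pkc k : P k (c k) = Some (p k).
  by rewrite /p; case: (Hc k); case: (P k (c k)).
have Pcol' t k : t != k -> P t (c k) = None.
  move=> tk; case: (colP (c k)) => i0 [_ U].
  have ek : k = i0 by apply: U; rewrite Pkc.
  case E: (P t (c k)) => [y|] //.
  have et : t = i0 by apply: U; rewrite E.
  by move: tk; rewrite ek et eqxx.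
have cinj : injective c.
  move=> k l ekl; apply/eqP; apply: contraT => kl.
  by move: (Pcol' k l kl); rewrite -ekl Pkc.
have Qe i k : Q i k = if i == c k then Some (- p k) else None.
  have := congr1 (fun M : 'M[option R]_n => M i (c k)) QP; rewrite !mxE.
  rewrite (big_single (t0:=k)); last by move=> t tk; rewrite Pcol' // mp_mulN.
  rewrite Pkc; case: (Q i k) => [q|] /=; case: eqP => // _ [] H.
  by congr Some; lra.
exists p => k l kl.
have ckl : c k != c l by apply: contra kl => /eqP /cinj ->.
have := Doff _ _ ckl; rewrite HD mxE.
rewrite (big_single (t0:=l)); last by move=> t tl; rewrite Pcol' // mp_mulN.
rewrite mxE (big_single (t0:=k)); last first.
  move=> s sk; rewrite Qe; case: eqP => // /cinj E.
  by move: sk; rewrite E eqxx.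
rewrite Qe eqxx mxE Pkc /= => [[H]]; lra.
Qed.
Theorem theorem5p8 (R : realFieldType) (n : nat) (A : 'M[R]_n) :
  (2 <= n)%N ->
  pseudo_diagonalizable (fin_mx A) ->
  (forall i, A i i <= 0) ->
  [/\ mcm A = 0,
      mp_Gamma (fin_mx (A_lambda A)) = mp_addmx (mp_id R n) (fin_mx A),
      mp_dim_eq (mp_eigenspace A) 1
    & forall i : 'I_n,
        is_basis (mp_eigenspace A) [:: vcol A i] /\
        (forall x, mp_eigenspace A x <-> exists a : option R, x = mp_scale a (vcol A i))].
Proof.
move=> n2 /pd_potential [d Hd] Hdiag.
have Hle k l : A k l <= d k - d l.
  have [->|kl] := eqVneq k l; first by rewrite subrr Hdiag.
  by rewrite Hd.
have n0 : (0 < n)%N by apply: leq_trans n2.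
have n1 : (1 < n)%N by [].
pose i0 := Ordinal n0. pose i1 := Ordinal n1.
have i01 : i0 != i1 by [].
have other (k : 'I_n) : exists l, l != k.
  have [->|k0] := eqVneq k i0; first by exists i1; rewrite eq_sym.
  by exists i0; rewrite eq_sym.
have Hmcm : mcm A = 0.
  have cmle x : x \in cycle_means A -> x <= 0.
    case/flatten_mapP => k _ /mapP [f _ ->].
    rewrite /cycle_mean; apply: mulr_le0_ge0; last by rewrite invr_ge0 ler0n.
    apply: (le_trans (ler_sum _ (fun t _ => Hle (f t) (f (inord (t.+1 %% k.+1)))))).
    rewrite sumrB subr_le0.
    have -> : \sum_(t < k.+1) d (f (inord (t.+1 %% k.+1))) = \sum_(t < k.+1) d (f (ordS t)).
      apply: eq_bigr => t _; congr (d (f _)); apply: val_inj; by rewrite /= inordK // ltn_pmod.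
    by rewrite [X in (X <= _)%R](reindex_inj (@ordS_inj _)) //=.
  have h0 : 0 \in cycle_means A.
    pose f : {ffun 'I_2 -> 'I_n} := [ffun t : 'I_2 => if val t == 0%N then i0 else i1].
    apply/flatten_mapP; exists 1%N; first by rewrite mem_iota.
    apply/mapP; exists f.
      rewrite mem_filter mem_enum andbT; apply/injectiveP => t s.
      rewrite !ffunE; case: t => [[|[|t]] Ht]; case: s => [[|[|s]] Hs] //= E; 
        by [apply: val_inj | move: i01; rewrite E eqxx | move: i01; rewrite E eqxx].
    rewrite /cycle_mean !big_ord_recl big_ord0 /= !ffunE /=.
    rewrite !inordK //= Hd // Hd 1?eq_sym //.
    by rewrite addr0 addrA subrK subrr mul0r.
  rewrite /mcm; apply/eqP; rewrite eq_le; apply/andP; split.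
    apply: foldr_max_le => //; case E: (cycle_means A) => [|y s] //=.
    by apply: cmle; rewrite E mem_head.
  exact: foldr_max_ge.
have ME k l : fin_mx A k l = Some (A k l) by rewrite mxE.
have powUB k i j : mp_le (mp_pow (fin_mx A) k i j) (Some (d i - d j)).
  elim: k i j => [|k IH] i j /=.
    by rewrite mxE; case: eqP => [->|] //=; rewrite subrr.
  rewrite mxE; apply: big_le_ub => t; rewrite ME.
  move: (IH i t); case: (mp_pow (fin_mx A) k i t) => //= a Ha.
  have := Hle t j; lra.
have pow1 i j : mp_pow (fin_mx A) 1 i j = Some (A i j).
  rewrite /= mxE (big_single (t0:=i)); last first.
    by move=> t ti; rewrite !mxE eq_sym (negbTE ti).
  by rewrite !mxE eqxx /= add0r.
have AL : A_lambda A = A by apply/matrixP => i j; rewrite mxE Hmcm subr0.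
have GE i j : mp_Gamma (fin_mx A) i j = \big[@mp_add R/None]_(k < n) mp_pow (fin_mx A) k.+1 i j.
  rewrite /mp_Gamma; apply: (big_morph (fun X : 'M[option R]_n => X i j)) => [X Y|]; by rewrite !mxE.
have vE i k : vcol A i k 0 = Some (d k - d i).
  rewrite mxE; case: eqP => [->|/eqP ki]; by rewrite ?subrr ?Hd.
have sE a i k : mp_scale a (vcol A i) k 0 = mp_mul a (Some (d k - d i)).
  by rewrite mxE vE.
have eig_char x : mp_eigenspace A x <-> forall k l, mp_mul (Some (d k - d l)) (x l 0) = x k 0.
  split.
    move=> H.
    have Hk k : mp_mulmx (fin_mx A) x k 0 = x k 0.
      have := congr1 (fun X : 'cV[option R]_n => X k 0) H.
      by rewrite /= [in RHS]mxE Hmcm mp_mul0.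
    have ge k l : k != l -> mp_le (mp_mul (Some (d k - d l)) (x l 0)) (x k 0).
      move=> kl; rewrite -(Hk k) mxE; apply: mp_le_trans _ (big_ge_term _ l).
      by rewrite /= mxE -Hd // mp_le_refl.
    move=> k l; have [->|kl] := eqVneq k l; first by rewrite subrr mp_mul0.
    have := ge k l kl; have := ge l k ltac:(by rewrite eq_sym).
    case: (x l 0) => [a|]; case: (x k 0) => [b|] /= h1 h2 //.
    congr Some; lra.
  move=> H; apply/matrixP => k j; rewrite [j]ord1 !mxE Hmcm mp_mul0.
  apply: mp_le_anti.
    apply: big_le_ub => l; rewrite mxE -(H k l).
    case: (x l 0) => //= a; have := Hle k l; lra.
  have [l lk] := other k.
  apply: mp_le_trans _ (big_ge_term _ l); rewrite /= mxE Hd; last by rewrite eq_sym.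
  by rewrite H mp_le_refl.
have eig_iff i x : mp_eigenspace A x <-> exists a, x = mp_scale a (vcol A i).
  split.
    move/eig_char => H; exists (x i 0); apply/matrixP => k j.
    by rewrite [j]ord1 sE -(H k i) mp_mulC.
  move=> [a ->]; apply/eig_char => k l; rewrite !sE; case: a => //= a; congr Some; lra.
have span1 (w x : 'cV[option R]_n) : in_span [:: w] x <-> exists c, forall k, x k 0 = mp_mul c (w k 0).
  split.
    by case=> a Ha; exists (a ord0) => k; rewrite Ha /= big_ord1.
  by case=> c Hc; exists (fun _ => c) => k; rewrite /= big_ord1 Hc.
have span_single (H : seq 'cV[option R]_n) (j0 : 'I_(size H)) (c : option R) (y : 'cV[option R]_n) :
   (forall k, y k 0 = mp_mul c (nth (mp_eps_mx R n 1) H j0 k 0)) -> in_span H y.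
  move=> Hy; exists (fun j => if j == j0 then c else None) => k.
  rewrite (big_single (t0:=j0)) ?eqxx //; by move=> j /negbTE ->.
have vS i : mp_eigenspace A (vcol A i).
  apply/(eig_iff i); exists (Some 0); apply/matrixP => k j; by rewrite [j]ord1 sE vE mp_mul0.
have nspan0 i : ~ in_span [::] (vcol A i).
  by case=> a Ha; have := Ha i; rewrite big_ord0 vE.
have basis i : is_basis (mp_eigenspace A) [:: vcol A i].
  split.
    move=> j; rewrite ltnS leqn0 => /eqP -> /=; exact: nspan0.
  move=> x; split.
    by move/(eig_iff i) => [a ->]; apply/span1; exists a => k; rewrite mxE.
  move/span1 => [c Hc]; apply/(eig_iff i); exists c; apply/matrixP => k j.
  by rewrite [j]ord1 mxE Hc.
split => //.
- rewrite AL; apply/matrixP => i j; rewrite GE; apply: mp_le_anti.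
    apply: big_le_ub => k; apply: mp_le_trans (powUB _ _ _) _.
    rewrite !mxE; case: eqP => [->|/eqP ij] /=; first by rewrite subrr le_max lexx.
    by rewrite Hd.
  rewrite !mxE; case: eqP => [->|/eqP ij].
    have -> : mp_add (Some 0) (Some (A j j)) = Some 0 by rewrite /= max_l ?Hdiag.
    have [l lj] := other j.
    apply: mp_le_trans _ (big_ge_term _ i1).
    change (mp_le (Some 0) (mp_mulmx (mp_pow (fin_mx A) 1) (fin_mx A) j j)).
    rewrite mxE; apply: mp_le_trans _ (big_ge_term _ l).
    rewrite pow1 ME /= (Hd j l) 1?eq_sym // (Hd l j) //.
    by rewrite addrA subrK subrr.
  by apply: mp_le_trans _ (big_ge_term _ i0); rewrite pow1 mp_le_refl.
- split; first by exists [:: vcol A i0]; split => //; exact: basis.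
  move=> G [Hind Hsp].
  case: G Hind Hsp => [|g0 [|g1 rest]] Hind Hsp //.
    by case: (nspan0 i0 ((Hsp (vcol A i0)).1 (vS i0))).
  have g0S : mp_eigenspace A g0.
    apply: (Hsp g0).2; apply: (span_single (g0::g1::rest) ord0 (Some 0)) => k; by rewrite mp_mul0.
  have g1S : mp_eigenspace A g1.
    apply: (Hsp g1).2; apply: (span_single (g0::g1::rest) (@Ordinal (size (g0::g1::rest)) 1 isT) (Some 0)) => k.
    by rewrite mp_mul0.
  have [a Ha] := (eig_iff i0 g0).1 g0S.
  have [b Hb] := (eig_iff i0 g1).1 g1S.
  case: b Hb => [b|] Hb.
    exfalso; apply: (Hind 0%N) => //=.
    apply: (span_single (g1::rest) ord0 (mp_mul a (Some (- b)))) => k /=.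
    rewrite Ha Hb !sE; case: a {Ha} => //= a; congr Some; lra.
  exfalso; apply: (Hind 1%N) => //=.
  by exists (fun _ => None) => k; rewrite big1 // Hb mxE.
Qed.
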